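(* Under the setting described in the context, let $\mathcal{K}$ be an arbitrary set of policies. Then \[ M_{1}\cap \mathcal{K}\subseteq \Pi (M_{2}\cap \mathcal{K})\subseteq M_{1}\cap \Pi (\mathcal{K})\subseteq M_{1}. \] In particular, taking $\mathcal{K}$ to be the set of all policies, $\Pi(M_2)=M_1$.
   Context: Let $T\ge 2$, $M\ge 1$ and $n_1,\dots,n_T\ge 1$ be integers. Let $\xi=(\xi_1,\dots,\xi_T)$ be a random vector with values in $\mathbb{R}^{MT}$, $\xi_t\in\mathbb{R}^M$, defined on a probability space $(\Omega,\mathcal{A},\mathbb{P})$, and write $\xi_{1:t}:=(\xi_1,\dots,\xi_t)$. A policy is a tuple $y=(y_t)_{t=1}^T$ where $y_1\in\mathbb{R}^{n_1}$ is deterministic and, for $t\ge 2$, $y_t:\mathbb{R}^{M(t-1)}\to\mathbb{R}^{n_t}$ is Borel measurable; $y_t$ is evaluated at $\xi_{1:t-1}$ (with $y_1(\xi_{1:0}):=y_1$). For $t=1,\dots,T$, $\tau=1,\dots,t$ and $k\in\{2,3\}$ let $A^{(k)}_{t,\tau}$, $B^{(k)}_{t,\tau}$ be given real matrices and $b^{(k)}_t$ given vectors of compatible sizes, with $B^{(3)}_{t,t}=0$ for all $t$. Fix $p\in(0,1]$. Define $M_1$ = set of policies $y$ such that (i) $\mathbb{P}\big(\sum_{\tau=1}^t A^{(2)}_{t,\tau}y_\tau(\xi_{1:\tau-1})+\sum_{\tau=1}^t B^{(2)}_{t,\tau}\xi_\tau\le b^{(2)}_t,\ t=1,\dots,T\big)\ge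 p$ and (ii) $\sum_{\tau=1}^t A^{(3)}_{t,\tau}y_\tau(\xi_{1:\tau-1})+\sum_{\tau=1}^{t-1} B^{(3)}_{t,\tau}\xi_\tau\le b^{(3)}_t$ for $t=1,\dots,T$, $\mathbb{P}$-almost surely; $M_2$ = set of policies $y$ such that $\mathbb{P}\big(\text{for all } t=1,\dots,T:\ \sum_{\tau=1}^t A^{(2)}_{t,\tau}y_\tau(\xi_{1:\tau-1})+\sum_{\tau=1}^t B^{(2)}_{t,\tau}\xi_\tau\le b^{(2)}_t \text{ and } \sum_{\tau=1}^t A^{(3)}_{t,\tau}y_\tau(\xi_{1:\tau-1})+\sum_{\tau=1}^{t-1} B^{(3)}_{t,\tau}\xi_\tau\le b^{(3)}_t\big)\ge p$. For vectors $z_1,\dots,z_{t-1}$ ($z_\tau\in\mathbb{R}^{n_\tau}$) and $\xi_{1:t-1}$ let $X_t(z_{1:t-1},\xi_{1:t-1}):=\{u\in\mathbb{R}^{n_t}: A^{(3)}_{t,t}u\le b^{(3)}_t-\sum_{\tau=1}^{t-1}B^{(3)}_{t,\tau}\xi_\tau-\sum_{\tau=1}^{t-1}A^{(3)}_{t,\tau}z_\tau\}$; it is assumed that all these polyhedra are nonempty, so the Euclidean projection $\pi_{X}$ onto each of them is well defined. The operator $\Pi$ maps a policy $y$ to $z=\Pi(y)$ defined recursively by $z_1:=\pi_{X_1}(y_1)$ and $z_t(\xi_{1:t-1}):=\pi_{X_t(z_1,z_2(\xi_1),\dots,z_{t-1}(\xi_{1:t-2}),\xi_{1:t-1})}(y_t(\xi_{1:t-1}))$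 for every $\xi_{1:t-1}$ and $t=2,\dots,T$; it is assumed that $\Pi(y)$ is again a policy (Borel measurable). For a set $\mathcal{K}$ of policies, $\Pi(\mathcal{K}):=\{\Pi(y):y\in\mathcal{K}\}$. *)

(* Defs.v *)
From Stdlib Require Import Reals ClassicalEpsilon.
From mathcomp Require Import all_boot.
Set Implicit Arguments. Unset Strict Implicit. Unset Printing Implicit Defensive.
Local Open Scope R_scope.

Definition vec (n : nat) := 'I_n -> R.
Definition mat (m n : nat) := 'I_m -> 'I_n -> R.

Definition mv (m n : nat) (A : mat m n) (u : vec n) : vec m :=
  fun i => \big[Rplus/R0]_(j < n) (A i j * u j).
Definition vle (m : nat) (u v : vec m) : Prop := forall i, u i <= v i.
Definition vplus (m : nat) (u v : vec m) : vec m := fun i => u i + v i.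
Definition vzero (m : nat) : vec m := fun _ => R0.
Definition vsum (m : nat) (lo hi : nat) (f : nat -> vec m) : vec m :=
  fun i => \big[Rplus/R0]_(lo <= tau < hi) f tau i.
Definition sqdist (n : nat) (u v : vec n) : R :=
  \big[Rplus/R0]_(j < n) ((u j - v j) * (u j - v j)).

Definition ext (k : nat) (x : vec k) (i : nat) : R :=
  match insub i with Some j => x j | None => R0 end.
Definition restr (k : nat) (s : nat -> R) : vec k := fun j => s (nat_of_ord j).
Definition trunc (k : nat) (s : nat -> R) : nat -> R :=
  fun i => if (i < k)%N then s i else R0.

(* xi = (xi_1,...,xi_T) in R^{MT}, flattened: component k of xi_tau sits
   at index M*(tau-1)+k.  The history xi_{1:t} is the first M*t entries. *)
Definition hist (M t : nat) (s : nat -> R) : vec (M * t)%N := @restr (M * t)%N s.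
Definition blk (M tau : nat) (s : nat -> R) : vec M :=
  fun k => s (M * (tau - 1)%N + nat_of_ord k)%N.

Definition is_sigma_algebra (Omega : Type) (F : (Omega -> Prop) -> Prop) : Prop :=
  F (fun _ => True) /\
  (forall A, F A -> F (fun w => ~ A w)) /\
  (forall An : nat -> Omega -> Prop, (forall k, F (An k)) ->
     F (fun w => exists k, An k w)).

Definition is_probability (Omega : Type) (F : (Omega -> Prop) -> Prop)
  (P : (Omega -> Prop) -> R) : Prop :=
  is_sigma_algebra F /\
  P (fun _ => True) = 1 /\
  (forall A, F A -> 0 <= P A) /\
  (forall An : nat -> Omega -> Prop,
     (forall k, F (An k)) ->
     (forall k l w, k <> l -> An k w -> An l w -> False) ->
     infinite_sum (fun k => P (An k)) (P (fun w => exists k, An k w))).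

Definition borel (n : nat) (B : vec n -> Prop) : Prop :=
  forall S : (vec n -> Prop) -> Prop, is_sigma_algebra S ->
    (forall (i : 'I_n) (a : R), S (fun x => x i <= a)) -> S B.

Definition borel_measurable (k m : nat) (f : vec k -> vec m) : Prop :=
  forall B, borel B -> borel (fun x => B (f x)).

Definition random_vector (Omega : Type) (F : (Omega -> Prop) -> Prop)
  (d : nat) (X : Omega -> vec d) : Prop :=
  forall B, borel B -> F (fun w => B (X w)).

Definition almost_surely (Omega : Type) (F : (Omega -> Prop) -> Prop)
  (P : (Omega -> Prop) -> R) (Q : Omega -> Prop) : Prop :=
  exists N, F N /\ P N = 0 /\ forall w, ~ N w -> Q w.

Record Data (M : nat) (n : nat -> nat) := {
  m2 : nat -> nat;
  m3 : nat -> nat;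
  A2 : forall t tau : nat, mat (m2 t) (n tau);
  B2 : forall t tau : nat, mat (m2 t) M;
  b2 : forall t : nat, vec (m2 t);
  A3 : forall t tau : nat, mat (m3 t) (n tau);
  B3 : forall t tau : nat, mat (m3 t) M;
  b3 : forall t : nat, vec (m3 t) }.
Arguments m2 {M n} d t.  Arguments m3 {M n} d t.
Arguments A2 {M n} d t tau _ _.  Arguments B2 {M n} d t tau _ _.
Arguments b2 {M n} d t _.  Arguments A3 {M n} d t tau _ _.
Arguments B3 {M n} d t tau _ _.  Arguments b3 {M n} d t _.

(* A policy: y t : R^{M(t-1)} -> R^{n_t}, evaluated at xi_{1:t-1};
   y 1 is a function on R^0, i.e. a deterministic vector.  Only t = 1..T
   is relevant. *)
Definition policy_t (M : nat) (n : nat -> nat) :=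
  forall t : nat, vec (M * (t - 1)%N)%N -> vec (n t).

Definition is_policy (T M : nat) (n : nat -> nat) (y : policy_t M n) : Prop :=
  forall t, (1 <= t <= T)%N -> borel_measurable (y t).

Definition yval M n (y : policy_t M n) (tau : nat) (s : nat -> R) : vec (n tau) :=
  y tau (@hist M (tau - 1)%N s).
Arguments yval {M n} y tau s _.

Definition C2 (T M : nat) n (D : Data M n) (y : policy_t M n) (s : nat -> R) : Prop :=
  forall t, (1 <= t <= T)%N ->
    vle (vplus (vsum 1 t.+1 (fun tau => mv (A2 D t tau) (yval y tau s)))
               (vsum 1 t.+1 (fun tau => mv (B2 D t tau) (@blk M tau s))))
        (b2 D t).

Definition C3 (T M : nat) n (D : Data M n) (y : policy_t M n) (s : nat -> R) : Prop :=
  forall t, (1 <= t <= T)%N ->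
    vle (vplus (vsum 1 t.+1 (fun tau => mv (A3 D t tau) (yval y tau s)))
               (vsum 1 t (fun tau => mv (B3 D t tau) (@blk M tau s))))
        (b3 D t).

Section Sets.
Variables (T M : nat) (n : nat -> nat) (D : Data M n).
Variables (Omega : Type) (F : (Omega -> Prop) -> Prop) (P : (Omega -> Prop) -> R).
Variable (xi : Omega -> vec (M * T)%N).
Variable (p : R).

Definition sample (w : Omega) : nat -> R := ext (xi w).

Definition M1 (y : policy_t M n) : Prop :=
  is_policy T y /\
  P (fun w => C2 T D y (sample w)) >= p /\
  almost_surely F P (fun w => C3 T D y (sample w)).

Definition M2 (y : policy_t M n) : Prop :=
  is_policy T y /\
  P (fun w => C2 T D y (sample w) /\ C3 T D y (sample w)) >= p.

Definition ae_eq (y y' : policy_t M n) : Prop :=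
  almost_surely F P (fun w => forall t, (1 <= t <= T)%N ->
     forall i, yval y t (sample w) i = yval y' t (sample w) i).
End Sets.

Definition is_proj (k : nat) (X : vec k -> Prop) (u z : vec k) : Prop :=
  X z /\ forall w, X w -> sqdist u z <= sqdist u w.

Definition proj (k : nat) (X : vec k -> Prop) (u : vec k) : vec k :=
  epsilon (inhabits u) (fun z => is_proj X u z).

(* X_t(z_{1:t-1}, xi_{1:t-1}), where zs tau : vec (n tau) gives z_tau
   and h is the (0-extended) history *)
Definition Xset M n (D : Data M n) (t : nat) (zs : forall tau, vec (n tau))
  (h : nat -> R) : vec (n t) -> Prop :=
  fun u => vle (mv (A3 D t t) u)
     (fun i => b3 D t i
        - vsum 1 t (fun tau => mv (B3 D t tau) (@blk M tau h)) i
        - vsum 1 t (fun tau => mv (A3 D t tau) (zs tau)) i).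

Arguments Xset {M n} D t zs h _.

(* PiRec t tau h = z_tau(h_{1:tau-1}) for tau <= t (the recursion of Pi),
   as 0-extended sequences; h is a 0-extended history. *)
Fixpoint PiRec M n (D : Data M n) (y : policy_t M n) (t : nat)
  : nat -> (nat -> R) -> nat -> R :=
  match t with
  | 0 => fun _ _ _ => R0
  | S t' => fun tau h =>
      if (tau <= t')%N then PiRec D y t' tau h
      else (* tau = t = t'+1 : projection onto X_t *)
        ext (proj (Xset D t
                  (fun tau' => @restr (n tau')
                     (PiRec D y t' tau' (trunc (M * (tau' - 1))%N h)))
                  (trunc (M * t')%N h))
                (y t (@hist M (t - 1)%N h)))
  end.

Definition Pi M n (D : Data M n) (y : policy_t M n) : policy_t M n :=
  fun t (h : vec (M * (t - 1)%N)%N) => @restr (n t) (PiRec D y t t (ext h)).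

(* Main.v *)
Require Import Defs.
From HB Require Import structures.
From Stdlib Require Import Reals ZArith Lra Lia ClassicalEpsilon FunctionalExtensionality PropExtensionality Classical.
From mathcomp Require Import all_boot.
Local Open Scope R_scope.

Lemma Rplus_assoc' : associative Rplus. Proof. by move=> *; rewrite Rplus_assoc. Qed.
HB.instance Definition _ := Monoid.isComLaw.Build R R0 Rplus Rplus_assoc' Rplus_comm Rplus_0_l.

Lemma Fext {O : Type} {F : (O -> Prop) -> Prop} {A B : O -> Prop} :
  F A -> (forall w, A w <-> B w) -> F B.
Proof.
move=> HA H; have -> : B = A; last by [].
apply: functional_extensionality => w; apply: propositional_extensionality.
by split => /H.
Qed.

Lemma F_true {O} {F : (O -> Prop) -> Prop} : is_sigma_algebra F -> F (fun _ => True).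
Proof. by case. Qed.

Lemma F_compl {O} {F : (O -> Prop) -> Prop} {A} : is_sigma_algebra F -> F A -> F (fun w => ~ A w).
Proof. by case=> _ [H _]; apply: H. Qed.

Lemma F_cunion {O} {F : (O -> Prop) -> Prop} {An : nat -> O -> Prop} :
  is_sigma_algebra F -> (forall k, F (An k)) -> F (fun w => exists k, An k w).
Proof. by case=> _ [_ H]; apply: H. Qed.

Lemma F_false {O} {F : (O -> Prop) -> Prop} : is_sigma_algebra F -> F (fun _ => False).
Proof.
move=> HF; apply: (Fext (F_compl HF (F_true HF))) => w; tauto.
Qed.

Lemma F_const {O} {F : (O -> Prop) -> Prop} (Q : Prop) : is_sigma_algebra F -> F (fun _ => Q).
Proof.
move=> HF; case: (classic Q) => HQ.
  by apply: (Fext (F_true HF)) => w; tauto.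
by apply: (Fext (F_false HF)) => w; tauto.
Qed.

Lemma F_union2 {O} {F : (O -> Prop) -> Prop} {A B} : is_sigma_algebra F -> F A -> F B ->
  F (fun w => A w \/ B w).
Proof.
move=> HF HA HB.
have H := @F_cunion _ _ (fun k => if k is 0%N then A else B) HF.
apply: (Fext (H _)); first by case.
move=> w; split; first by case=> [[|k]]; tauto.
by case=> h; [exists 0%N | exists 1%N].
Qed.

Lemma F_inter2 {O} {F : (O -> Prop) -> Prop} {A B} : is_sigma_algebra F -> F A -> F B ->
  F (fun w => A w /\ B w).
Proof.
move=> HF HA HB.
apply: (Fext (F_compl HF (F_union2 HF (F_compl HF HA) (F_compl HF HB)))) => w.
split; [by move=> H; split; apply: NNPP => h; apply: H; tauto | tauto].
Qed.

Lemma F_cinter {O} {F : (O -> Prop) -> Prop} {An : nat -> O -> Prop} :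
  is_sigma_algebra F -> (forall k, F (An k)) -> F (fun w => forall k, An k w).
Proof.
move=> HF H.
apply: (Fext (F_compl HF (F_cunion HF (fun k => F_compl HF (H k))))) => w.
split; last by move=> h [k]; apply.
by move=> h k; apply: NNPP => h'; apply: h; exists k.
Qed.

Lemma F_impl {O} {F : (O -> Prop) -> Prop} (c : Prop) {Q} : is_sigma_algebra F -> (c -> F Q) ->
  F (fun w => c -> Q w).
Proof.
move=> HF HQ; case: (classic c) => Hc.
  by apply: (Fext (HQ Hc)) => w; tauto.
by apply: (Fext (F_true HF)) => w; tauto.
Qed.

Lemma F_ford {O} {F : (O -> Prop) -> Prop} {m} {Q : 'I_m -> O -> Prop} :
  is_sigma_algebra F -> (forall i, F (Q i)) -> F (fun w => forall i, Q i w).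
Proof.
move=> HF H.
have H1 : forall k, F (fun w => forall Hk : (k < m)%N, Q (Ordinal Hk) w).
  move=> k; case: (classic (is_true (k < m)%N)) => Hk.
    apply: (Fext (H (Ordinal Hk))) => w; split; last by apply.
    by move=> h Hk'; rewrite (bool_irrelevance Hk' Hk).
  by apply: (Fext (F_true HF)) => w; split => // _ Hk'; case: (Hk Hk').
apply: (Fext (F_cinter HF H1)) => w; split.
  by move=> h [k Hk]; apply: h.
by move=> h k Hk; apply: h.
Qed.

Definition meas {O} (F : (O -> Prop) -> Prop) (f : O -> R) := forall a, F (fun w => f w <= a).

Lemma meas_gt {O} {F : (O -> Prop) -> Prop} {f} a : is_sigma_algebra F -> meas F f ->
  F (fun w => a < f w).
Proof.
move=> HF Hf; apply: (Fext (F_compl HF (Hf a))) => w; split; lra.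
Qed.

Lemma small_inv (x : R) : 0 < x -> exists k : nat, / INR k.+1 < x.
Proof.
move=> Hx; case: (INR_unbounded (/ x)) => k Hk; exists k.
have H1 : INR k < INR k.+1 by apply: lt_INR; lia.
have H0 : 0 < / x by apply: Rinv_0_lt_compat.
rewrite -(Rinv_inv x); apply: Rinv_lt_contravar; first by nra.
lra.
Qed.

Lemma meas_lt {O} {F : (O -> Prop) -> Prop} {f} a : is_sigma_algebra F -> meas F f ->
  F (fun w => f w < a).
Proof.
move=> HF Hf.
apply: (Fext (@F_cunion _ _ (fun k => fun w => f w <= a - / INR k.+1) HF (fun k => Hf _))).
move=> w; split.
  case=> k Hk; have : 0 < / INR k.+1 by apply: Rinv_0_lt_compat; apply: lt_0_INR; lia.
  lra.
move=> H; case: (@small_inv (a - f w)); first lra.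
by move=> k Hk; exists k; lra.
Qed.

Lemma meas_ge {O} {F : (O -> Prop) -> Prop} {f} a : is_sigma_algebra F -> meas F f ->
  F (fun w => a <= f w).
Proof.
move=> HF Hf; apply: (Fext (F_compl HF (meas_lt a HF Hf))) => w; split; lra.
Qed.

Lemma meas_const {O} {F : (O -> Prop) -> Prop} c : is_sigma_algebra F -> meas F (fun _ => c).
Proof. by move=> HF a; apply: F_const. Qed.

Lemma meas_scale {O} {F : (O -> Prop) -> Prop} c {f} : is_sigma_algebra F -> meas F f ->
  meas F (fun w => c * f w).
Proof.
move=> HF Hf a.
case: (Rtotal_order c 0) => [Hc|[Hc|Hc]].
- apply: (Fext (meas_ge (a / c) HF Hf)) => w.
  have E : c * (a / c) = a by field; lra.
  split => H.
    have : c * f w <= c * (a / c) by apply: Rmult_le_compat_neg_l; lra.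
    lra.
  apply: Rnot_lt_le => h'.
  have : c * f w > c * (a / c) by apply: Rmult_lt_gt_compat_neg_l; lra.
  lra.
- subst c; apply: (Fext (meas_const 0 HF a)) => w; rewrite Rmult_0_l; tauto.
- apply: (Fext (Hf (a / c))) => w.
  have E : c * (a / c) = a by field; lra.
  split => H.
    have : c * f w <= c * (a / c) by apply: Rmult_le_compat_l; lra.
    lra.
  apply: Rnot_lt_le => h'.
  have : c * (a / c) < c * f w by apply: Rmult_lt_compat_l; lra.
  lra.
Qed.

Lemma dense_q (f g a : R) : a < f + g ->
  exists m : nat, exists k : Z, IZR k / INR m.+1 < f /\ a - IZR k / INR m.+1 < g.
Proof.
move=> H.
have Hd : 0 < (f + g - a) / 2 by lra.
case: (@small_inv _ Hd) => m Hm.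
set N := INR m.+1 in Hm *.
have HN : 0 < N by apply: lt_0_INR; lia.
have Hi : 0 < / N by apply: Rinv_0_lt_compat.
exists m, (up (f * N) - 2)%Z.
case: (archimed (f * N)) => h1 h2.
rewrite minus_IZR.
have E : (IZR (up (f * N)) - 2) / N = IZR (up (f * N)) / N - 2 * / N by field; lra.
have E2 : IZR (up (f * N)) / N = (IZR (up (f * N)) - f * N) * / N + f by field; lra.
rewrite E E2.
have : (IZR (up (f * N)) - f * N) * / N <= 1 * / N by apply: Rmult_le_compat_r; lra.
have : 0 < (IZR (up (f * N)) - f * N) * / N by apply: Rmult_lt_0_compat; lra.
lra.
Qed.

Lemma meas_plus {O} {F : (O -> Prop) -> Prop} {f g} : is_sigma_algebra F -> meas F f -> meas F g ->
  meas F (fun w => f w + g w).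
Proof.
move=> HF Hf Hg a.
pose Pq (q : R) := fun w => q < f w /\ a - q < g w.
have HPq : forall q, F (Pq q).
  by move=> q; apply: F_inter2 => //; apply: meas_gt.
pose q m (k : Z) := IZR k / INR m.+1.
have HU : F (fun w => exists m, exists j, Pq (q m (Z.of_nat j)) w \/ Pq (q m (- Z.of_nat j)%Z) w).
  apply: F_cunion => // m; apply: F_cunion => // j; apply: F_union2 => //.
apply: (Fext (F_compl HF HU)) => w; split.
  move=> H; apply: Rnot_lt_le => H'; apply: H.
  case: (dense_q _ _ _ H') => m [k [h1 h2]].
  exists m; case: (Z_lt_le_dec k 0) => hk; last first.
      exists (Z.to_nat k); left; rewrite /Pq /q Z2Nat.id //.
  exists (Z.to_nat (- k)); right; rewrite /Pq /q Z2Nat.id; last by lia.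
  by rewrite Z.opp_involutive.
move=> H [m [j [[h1 h2]|[h1 h2]]]]; lra.
Qed.

Lemma meas_big {O} {F : (O -> Prop) -> Prop} {I : eqType} (r : seq I) (P : pred I)
  (G : I -> O -> R) : is_sigma_algebra F -> (forall i, i \in r -> meas F (G i)) ->
  meas F (fun w => \big[Rplus/R0]_(i <- r | P i) G i w).
Proof.
move=> HF; elim: r => [|x r IH] H.
  move=> a; apply: (Fext (meas_const 0 HF a)) => w; by rewrite big_nil.
have Hr : meas F (fun w => \big[Rplus/R0]_(i <- r | P i) G i w).
  by apply: IH => i hi; apply: H; rewrite inE hi orbT.
case Px: (P x).
  move=> a; apply: (Fext (meas_plus HF (H x (mem_head _ _)) Hr a)) => w.
  by rewrite big_cons Px.
move=> a; apply: (Fext (Hr a)) => w; by rewrite big_cons Px.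
Qed.

Lemma P_ext {O} (P : (O -> Prop) -> R) (A B : O -> Prop) :
  (forall w, A w <-> B w) -> P A = P B.
Proof.
move=> H; f_equal; apply: functional_extensionality => w.
by apply: propositional_extensionality.
Qed.

Lemma sum_cst (c : R) n : sum_f_R0 (fun _ => c) n = INR n.+1 * c.
Proof.
elim: n => [|n IH] /=; first lra.
rewrite IH; have := S_INR n.+1; simpl; lra.
Qed.

Lemma P_empty {O} {F : (O -> Prop) -> Prop} {P : (O -> Prop) -> R} :
  is_probability F P -> P (fun _ => False) = 0.
Proof.
case=> HF [_ [Hpos Hadd]].
have H := Hadd (fun _ => fun _ => False) (fun _ => F_false HF) (fun _ _ _ _ h _ => h).
have E : P (fun w => exists k : nat, False) = P (fun _ => False).
  by apply: P_ext => w; split => // [[]].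
rewrite E in H.
have H0 := Hpos _ (F_false HF).
case: (Rle_lt_or_eq_dec _ _ H0) => // Hc.
case: (H _ Hc) => N HN.
have := HN N.+1 ltac:(lia).
rewrite sum_cst; unfold Rdist.
have -> : INR N.+2 * P (fun _ => False) - P (fun _ => False) = INR N.+1 * P (fun _ => False).
  rewrite [INR N.+2]S_INR; ring.
have h1 : 1 <= INR N.+1 by apply: (le_INR 1); lia.
rewrite Rabs_right; nra.
Qed.

Lemma P_add {O} {F : (O -> Prop) -> Prop} {P : (O -> Prop) -> R} {A B : O -> Prop} :
  is_probability F P -> F A -> F B -> (forall w, A w -> B w -> False) ->
  P (fun w => A w \/ B w) = P A + P B.
Proof.
move=> HP HA HB Hd; have P0 := P_empty HP.
case: HP => HF [_ [Hpos Hadd]].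
pose S k := match k with 0%N => A | 1%N => B | _ => fun _ : O => False end.
have HS : forall k, F (S k) by case=> [|[|k]] //=; apply: F_false.
have Hdisj : forall k l w, k <> l -> S k w -> S l w -> False.
  case=> [|[|k]] [|[|l]] w //= ; try (by move=> _ h; case h);
  try (by move=> _ _ h; case h); try (by move=> h; case: h).
  - by move=> _ h1 h2; apply: (Hd w).
  - by move=> _ h1 h2; apply: (Hd w).
have H := Hadd S HS Hdisj.
have H2 : infinite_sum (fun k => P (S k)) (P A + P B).
  move=> e He; exists 1%N => k Hk.
  have -> : sum_f_R0 (fun k => P (S k)) k = P A + P B.
    case: k Hk => [|k] Hk; first lia.
    clear Hk; elim: k => [|k IH] /=; first lra.
    by rewrite /= in IH; rewrite IH P0; ring.
  by unfold Rdist; rewrite Rminus_diag Rabs_R0.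
rewrite -(uniqueness_sum _ _ _ H H2).
apply: P_ext => w; split.
  by case=> h; [exists 0%N | exists 1%N].
by case=> [[|[|k]]] /=; tauto.
Qed.

Lemma P_mono {O} {F : (O -> Prop) -> Prop} {P : (O -> Prop) -> R} {A B : O -> Prop} :
  is_probability F P -> F A -> F B -> (forall w, A w -> B w) -> P A <= P B.
Proof.
move=> HP HA HB H; have HF := proj1 HP.
have HC : F (fun w => B w /\ ~ A w) by apply: F_inter2 => //; apply: F_compl.
have E := P_add HP HA HC (fun w h1 h2 => proj2 h2 h1).
have -> : P B = P (fun w => A w \/ (B w /\ ~ A w)).
  apply: P_ext => w; split; last by case=> [/H|[]].
  by move=> hb; case: (classic (A w)) => h; [left | right].
rewrite E; have := proj1 (proj2 (proj2 HP)) _ HC; lra.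
Qed.

Lemma P_null {O} {F : (O -> Prop) -> Prop} {P : (O -> Prop) -> R} {A E N : O -> Prop} :
  is_probability F P -> F A -> F E -> F N -> P N = 0 ->
  (forall w, A w -> E w \/ N w) -> P A <= P E.
Proof.
move=> HP HA HE HN PN H; have HF := proj1 HP.
have HC : F (fun w => N w /\ ~ E w) by apply: F_inter2 => //; apply: F_compl.
have Hu := P_add HP HE HC (fun w h1 h2 => proj2 h2 h1).
have h1 : P A <= P (fun w => E w \/ (N w /\ ~ E w)).
  apply: (P_mono HP HA) => //; first by apply: F_union2.
  move=> w /H [h|h]; first by left.
  by case: (classic (E w)) => h'; [left | right].
have h2 : P (fun w => N w /\ ~ E w) <= P N by apply: (P_mono HP HC HN) => w [].
lra.
Qed.

Lemma borel_sigma k : is_sigma_algebra (@borel k).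
Proof.
split; first by move=> S HS _; case: HS => [h _].
split.
  move=> A HA S HS Hg; have [h1 [h2 h3]] := HS; apply: h2; apply: HA => //.
move=> An HA S HS Hg; have [h1 [h2 h3]] := HS; apply: h3 => k'; apply: HA => //.
Qed.

Lemma borel_pre k m (phi : vec k -> vec m) :
  (forall i a, borel (fun v => phi v i <= a)) ->
  forall B, borel B -> borel (fun v => B (phi v)).
Proof.
move=> Hg B HB; apply: (HB (fun B => borel (fun v => B (phi v)))) => //.
have Hs := borel_sigma k.
split; first exact: F_true Hs.
split; first by move=> A HA; apply: (F_compl Hs HA).
by move=> An HA; apply: (F_cunion Hs HA).
Qed.

Lemma borel_ext k i a : borel (fun v : vec k => ext v i <= a).
Proof.
rewrite /ext; case: (insub i) => [j|].
  by move=> S _; apply.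
exact: F_const (borel_sigma k).
Qed.

Lemma big_lin {I : Type} (r : seq I) (P : pred I) (f g : I -> R) a b :
  \big[Rplus/R0]_(i <- r | P i) (a * f i + b * g i) =
  a * \big[Rplus/R0]_(i <- r | P i) f i + b * \big[Rplus/R0]_(i <- r | P i) g i.
Proof.
elim: r => [|x r IH]; first by rewrite !big_nil; ring.
rewrite !big_cons; case: (P x); rewrite IH; ring.
Qed.

Lemma big_ge0 {I : Type} (r : seq I) (P : pred I) (f : I -> R) :
  (forall i, 0 <= f i) -> 0 <= \big[Rplus/R0]_(i <- r | P i) f i.
Proof.
move=> H; elim: r => [|x r IH]; first by rewrite big_nil; lra.
rewrite big_cons; case: (P x) => //; have := H x; lra.
Qed.

Lemma big_term {I : eqType} (r : seq I) (P : pred I) (f : I -> R) i0 :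
  (forall i, 0 <= f i) -> i0 \in r -> P i0 -> f i0 <= \big[Rplus/R0]_(i <- r | P i) f i.
Proof.
move=> H; elim: r => [|x r IH] //; rewrite inE big_cons => /orP [/eqP <-|hi] Hp.
  rewrite Hp; have := big_ge0 r P f H; lra.
have := IH hi Hp; case: (P x) => //; have := H x; lra.
Qed.

Lemma big_le {I : Type} (r : seq I) (P : pred I) (f g : I -> R) :
  (forall i, f i <= g i) -> \big[Rplus/R0]_(i <- r | P i) f i <= \big[Rplus/R0]_(i <- r | P i) g i.
Proof.
move=> H; elim: r => [|x r IH]; first by rewrite !big_nil; lra.
rewrite !big_cons; case: (P x) => //; have := H x; lra.
Qed.

Lemma cv_ext {u v : nat -> R} {l} : Un_cv u l -> (forall n, u n = v n) -> Un_cv v l.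
Proof. by move=> H E e He; case: (H e He) => N HN; exists N => n Hn; rewrite -E; apply: HN. Qed.

Lemma cv_cst (c : R) : Un_cv (fun _ => c) c.
Proof. by move=> e He; exists 0%N => n _; unfold Rdist; rewrite Rminus_diag Rabs_R0. Qed.

Lemma cv_big {I : Type} (r : seq I) (P : pred I) (G : I -> nat -> R) (L : I -> R) :
  (forall i, Un_cv (G i) (L i)) ->
  Un_cv (fun n => \big[Rplus/R0]_(i <- r | P i) G i n) (\big[Rplus/R0]_(i <- r | P i) L i).
Proof.
move=> H; elim: r => [|x r IH].
  rewrite big_nil; apply: (cv_ext (cv_cst 0)) => n; by rewrite big_nil.
rewrite big_cons; case Px: (P x).
  by apply: (cv_ext (CV_plus _ _ _ _ (H x) IH)) => n; rewrite big_cons Px.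
by apply: (cv_ext IH) => n; rewrite big_cons Px.
Qed.

Lemma cv_inv : Un_cv (fun n => / INR n.+1) 0.
Proof.
move=> e He; case: (@small_inv _ He) => N HN; exists N => n Hn.
have h1 : 0 < INR n.+1 by apply: lt_0_INR; lia.
have h2 : INR N.+1 <= INR n.+1 by apply: le_INR; lia.
have h0 : 0 < INR N.+1 by apply: lt_0_INR; lia.
have h3 : / INR n.+1 <= / INR N.+1 by apply: Rinv_le_contravar; lra.
have h4 : 0 < / INR n.+1 by apply: Rinv_0_lt_compat.
unfold Rdist; rewrite Rminus_0_r Rabs_right; lra.
Qed.

Lemma big_lin_ord k (f g : 'I_k -> R) a b :
  \big[Rplus/R0]_(j < k) (a * f j + b * g j) =
  a * \big[Rplus/R0]_(j < k) f j + b * \big[Rplus/R0]_(j < k) g j.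
Proof. exact: big_lin. Qed.

Lemma sqdist_ge0 {k} (a b : vec k) : 0 <= sqdist a b.
Proof. by apply: big_ge0 => j; apply: Rle_0_sqr. Qed.

Lemma inv_pos n : 0 < / INR n.+1.
Proof. by apply: Rinv_0_lt_compat; apply: lt_0_INR; lia. Qed.

Lemma inv_mono n N : (N <= n)%N -> / INR n.+1 <= / INR N.+1.
Proof.
move/leP=> H.
have h0 : 0 < INR N.+1 by apply: lt_0_INR; lia.
have h2 : INR N.+1 <= INR n.+1 by apply: le_INR; lia.
by apply: Rinv_le_contravar.
Qed.

Lemma sq_lt x e : x * x < e * e -> 0 < e -> Rabs x < e.
Proof.
move=> H He; case: (Rcase_abs x) => h.
  rewrite Rabs_left //; nra.
rewrite Rabs_right //; nra.
Qed.

Lemma proj_exists k m (A : mat m k) (c : vec m) (u : vec k) :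
  (exists x, vle (mv A x) c) -> exists z, is_proj (fun x => vle (mv A x) c) u z.
Proof.
move=> [x0 Hx0].
pose X := fun x => vle (mv A x) c.
pose E r := exists z, X z /\ r = - sqdist u z.
have Hb : bound E.
  by exists 0 => r [z [_ ->]]; have := sqdist_ge0 u z; lra.
have Hne : exists r, E r by exists (- sqdist u x0), x0.
case: (completeness E Hb Hne) => l [Hub Hlub].
pose d := - l.
have Hd1 : forall z, X z -> d <= sqdist u z.
  move=> z Hz; have := Hub _ (ex_intro _ z (conj Hz erefl)); rewrite /d; lra.
have Hd2 : forall e, 0 < e -> exists z, X z /\ sqdist u z < d + e.
  move=> e He; apply: NNPP => hn.
  have : is_upper_bound E (l - e).
    move=> r [z [Hz ->]]; apply: Rnot_lt_le => h; apply: hn.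
    by exists z; split => //; rewrite /d; lra.
  move/Hlub; lra.
pose zs n := proj1_sig (constructive_indefinite_description _ (Hd2 _ (inv_pos n))).
have Hzs : forall n, X (zs n) /\ sqdist u (zs n) < d + / INR n.+1.
  by move=> n; exact: (proj2_sig (constructive_indefinite_description _ (Hd2 _ (inv_pos n)))).
have Hmid : forall x y, X x -> X y -> X (fun j => (x j + y j) / 2).
  move=> x y hx hy i.
  have -> : mv A (fun j => (x j + y j) / 2) i = / 2 * mv A x i + / 2 * mv A y i.
    rewrite /mv -big_lin_ord; apply: eq_bigr => j _; field.
  have := hx i; have := hy i; lra.
have Hpar : forall x y, sqdist x y = 2 * sqdist u x + 2 * sqdist u y
                                   - 4 * sqdist u (fun j => (x j + y j) / 2).
  move=> x y.
  have -> : sqdist x y = \big[Rplus/R0]_(j < k)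
      (1 * (2 * ((u j - x j) * (u j - x j)) + 2 * ((u j - y j) * (u j - y j)))
       + (-4) * ((u j - (x j + y j) / 2) * (u j - (x j + y j) / 2))).
    by apply: eq_bigr => j _; field.
  rewrite big_lin_ord big_lin_ord /sqdist; ring.
have Hcl : forall n m, sqdist (zs n) (zs m) <= 2 * / INR n.+1 + 2 * / INR m.+1.
  move=> n m'; rewrite Hpar.
  have := Hd1 _ (Hmid _ _ (proj1 (Hzs n)) (proj1 (Hzs m'))).
  have := proj2 (Hzs n); have := proj2 (Hzs m'); lra.
have Hc : forall j, Cauchy_crit (fun n => zs n j).
  move=> j e He.
  have He2 : 0 < e * e / 4 by nra.
  case: (@small_inv _ He2) => N HN; exists N => n m' Hn Hm.
  unfold Rdist; apply: sq_lt => //.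
  have h1 : (zs n j - zs m' j) * (zs n j - zs m' j) <= sqdist (zs n) (zs m').
    apply: (big_term _ _ (fun j => (zs n j - zs m' j) * (zs n j - zs m' j))) => //.
      by move=> i; apply: Rle_0_sqr.
    by rewrite /index_enum -enumT mem_enum.
  have := Hcl n m'; have := inv_mono n N ltac:(apply/leP; lia).
  have := inv_mono m' N ltac:(apply/leP; lia).
  lra.
pose z := fun j => proj1_sig (R_complete _ (Hc j)).
have Hz : forall j, Un_cv (fun n => zs n j) (z j).
  by move=> j; exact: (proj2_sig (R_complete _ (Hc j))).
have HXz : X z.
  move=> i.
  apply: (@Rle_cv_lim (fun n => mv A (zs n) i) (fun _ => c i)).
  - by move=> n; exact: (proj1 (Hzs n) i).
  - exact: (cv_big _ _ (fun j n => A i j * zs n j) (fun j => A i j * z j)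
              (fun j => CV_mult _ _ _ _ (cv_cst _) (Hz j))).
  - exact: cv_cst.
have Hzd : sqdist u z <= d.
  have h := CV_plus _ _ _ _ (cv_cst d) cv_inv; rewrite Rplus_0_r in h.
  apply: (@Rle_cv_lim (fun n => sqdist u (zs n)) _ _ _ _ _ h).
  - by move=> n; have := proj2 (Hzs n); lra.
  - exact: (cv_big _ _ (fun j n => (u j - zs n j) * (u j - zs n j))
              (fun j => (u j - z j) * (u j - z j))
              (fun j => CV_mult _ _ _ _ (CV_minus _ _ _ _ (cv_cst _) (Hz j))
                                        (CV_minus _ _ _ _ (cv_cst _) (Hz j)))).
exists z; split => // w Hw; have := Hd1 w Hw; lra.
Qed.

Lemma proj_spec {k} (X : vec k -> Prop) u : (exists z, is_proj X u z) -> is_proj X u (proj X u).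
Proof. by move=> H; apply: epsilon_spec. Qed.

Lemma proj_id {k} (X : vec k -> Prop) u : X u -> proj X u = u.
Proof.
move=> Hu.
have Hs : sqdist u u = 0.
  rewrite /sqdist; rewrite (eq_bigr (fun _ => 0 * 0)); last by move=> j _; ring.
  have := big_lin_ord k (fun _ => 0) (fun _ => 0) 0 0; rewrite !Rmult_0_l Rplus_0_l.
  by move=> ->.
have Hp : is_proj X u u by split => // w _; rewrite Hs; apply: sqdist_ge0.
have [H1 H2] := proj_spec X u (ex_intro _ u Hp).
have H0 := H2 u Hu; rewrite Hs in H0.
apply: functional_extensionality => j; apply: Rminus_diag_uniq_sym.
have h : (u j - proj X u j) * (u j - proj X u j) <= sqdist u (proj X u).
  apply: (big_term _ _ (fun j => (u j - proj X u j) * (u j - proj X u j))) => //.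
    by move=> i; apply: Rle_0_sqr.
  by rewrite /index_enum -enumT mem_enum.
apply: Rsqr_0_uniq; have := Rle_0_sqr (u j - proj X u j); unfold Rsqr in *.
lra.
Qed.

Lemma ext_lt {k} (v : vec k) i (Hi : (i < k)%N) : ext v i = v (Ordinal Hi).
Proof. by rewrite /ext insubT. Qed.

Lemma ext_ge {k} (v : vec k) i : ~~ (i < k)%N -> ext v i = 0.
Proof. by move=> H; rewrite /ext insubF //; apply/negbTE. Qed.

Lemma restr_ext {k} (v : vec k) : @restr k (ext v) = v.
Proof. by apply: functional_extensionality => j; rewrite /restr (ext_lt v _ (ltn_ord j)); case: j => j hj /=; congr v; apply: val_inj. Qed.

Lemma ext_hist_lt M k s i : (i < M * k)%N -> ext (@hist M k s) i = s i.
Proof. by move=> H; rewrite (ext_lt _ _ H). Qed.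

Lemma trunc_ext M j k s : (j <= k)%N -> trunc (M * j) (ext (@hist M k s)) = ext (@hist M j s).
Proof.
move=> H; apply: functional_extensionality => i; rewrite /trunc.
case: (boolP (i < M * j)%N) => Hi.
  rewrite !ext_hist_lt //; apply: (leq_trans Hi); by rewrite leq_mul2l H orbT.
by rewrite ext_ge.
Qed.

Lemma PiRec_le {M n} (D : Data M n) y t tau h : (tau <= t)%N -> PiRec D y t tau h = PiRec D y tau tau h.
Proof.
elim: t => [|t IH] Ht.
  by move: Ht; rewrite leqn0 => /eqP ->.
rewrite /=; case: (boolP (tau <= t)%N) => H; first by rewrite IH.
have -> : tau = t.+1 by apply/eqP; rewrite eqn_leq Ht /= ltnNge.
by rewrite /= ltnn.
Qed.

Lemma Xset_ext {M n} (D : Data M n) t (zs zs' : forall tau, vec (n tau)) h h' :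
  (forall tau, (1 <= tau < t)%N -> zs tau = zs' tau) ->
  (forall tau, (1 <= tau < t)%N -> @blk M tau h = @blk M tau h') ->
  Xset D t zs h = Xset D t zs' h'.
Proof.
move=> Hz Hb.
have E1 : forall i, vsum 1 t (fun tau => mv (B3 D t tau) (@blk M tau h)) i
                  = vsum 1 t (fun tau => mv (B3 D t tau) (@blk M tau h')) i.
  by move=> i; rewrite /vsum; apply: eq_big_nat => tau Ht; rewrite Hb.
have E2 : forall i, vsum 1 t (fun tau => mv (A3 D t tau) (zs tau)) i
                  = vsum 1 t (fun tau => mv (A3 D t tau) (zs' tau)) i.
  by move=> i; rewrite /vsum; apply: eq_big_nat => tau Ht; rewrite Hz.
apply: functional_extensionality => u; apply: propositional_extensionality.
rewrite /Xset /vle; split => H i; have := H i; by rewrite E1 E2.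
Qed.

Lemma blk_trunc M t' tau s : (1 <= tau < t'.+1)%N ->
  @blk M tau (trunc (M * t') (ext (@hist M (t'.+1 - 1) s))) = @blk M tau s.
Proof.
move=> /andP [H1 H2]; apply: functional_extensionality => kk; rewrite /blk /trunc.
have Hk := ltn_ord kk.
have Hi : (M * (tau - 1) + kk < M * t')%N.
  have E : (M * tau = M * (tau - 1) + M)%N by rewrite -mulnSr subn1 prednK.
  apply: (@leq_trans (M * tau)); first by rewrite E ltn_add2l.
  by rewrite leq_mul2l -ltnS H2 orbT.
rewrite Hi ext_hist_lt //.
have -> : (t'.+1 - 1 = t')%N by rewrite subn1.
exact: Hi.
Qed.

Lemma Pi_key {M n} (D : Data M n) y t s : (1 <= t)%N ->
  yval (Pi D y) t s = proj (Xset D t (fun tau => yval (Pi D y) tau s) s) (yval y t s).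
Proof.
case: t => [//|t'] _.
rewrite /yval /Pi [PiRec D y t'.+1 t'.+1 _]/= ltnn restr_ext.
rewrite /hist restr_ext -/(@hist M _ s).
congr proj; apply: Xset_ext.
  move=> tau /andP [H1 H2]; rewrite PiRec_le // trunc_ext //.
  by apply: leq_sub2r; apply: ltnW.
move=> tau Ht; exact: (blk_trunc M t' tau s Ht).
Qed.

Lemma C3_X {M n} (D : Data M n) (y : policy_t M n) t s : (1 <= t)%N ->
  vle (vplus (vsum 1 t.+1 (fun tau => mv (A3 D t tau) (yval y tau s)))
             (vsum 1 t (fun tau => mv (B3 D t tau) (@blk M tau s))))
      (b3 D t)
  <-> Xset D t (fun tau => yval y tau s) s (yval y t s).
Proof.
move=> Ht.
have E : forall i, vsum 1 t.+1 (fun tau => mv (A3 D t tau) (yval y tau s)) i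
   = vsum 1 t (fun tau => mv (A3 D t tau) (yval y tau s)) i + mv (A3 D t t) (yval y t s) i.
  by move=> i; rewrite /vsum big_nat_recr.
rewrite /vle /vplus /Xset; split => H i; have := H i; rewrite ?E; lra.
Qed.

Lemma C3_Pi {T M n} (D : Data M n) (y : policy_t M n)
  (Hne : forall t, (1 <= t <= T)%N ->
           forall (zs : forall tau, vec (n tau)) (h : nat -> R),
           exists u, Xset D t zs h u) s :
  C3 T D (Pi D y) s.
Proof.
move=> t Ht; have Ht1 : (1 <= t)%N by case/andP: Ht.
apply/(C3_X D _ _ s Ht1).
rewrite {1}(Pi_key D y _ s Ht1).
apply: (proj1 (proj_spec _ _ _)).
apply: proj_exists; exact: Hne.
Qed.

Lemma Pi_fix {T M n} (D : Data M n) (y : policy_t M n) s :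
  C3 T D y s -> forall t, (1 <= t <= T)%N -> yval (Pi D y) t s = yval y t s.
Proof.
move=> HC.
suff : forall N t, (t <= N)%N -> (1 <= t <= T)%N -> yval (Pi D y) t s = yval y t s.
  by move=> H t; apply: H (leqnn t).
elim=> [|N IH] t HtN Ht.
  by move: Ht; rewrite leqn0 in HtN; rewrite (eqP HtN).
have Ht1 : (1 <= t)%N by case/andP: Ht.
rewrite (Pi_key D y _ s Ht1).
rewrite (Xset_ext D t _ (fun tau => yval y tau s) _ s) //.
  apply: proj_id; apply/(C3_X D _ _ s Ht1); exact: HC.
move=> tau /andP [H1 H2]; apply: IH.
  by rewrite -ltnS (leq_trans H2).
by rewrite H1 /= (leq_trans (ltnW H2)) //; case/andP: Ht.
Qed.

Lemma C2_congr {T M n} (D : Data M n) (y1 y2 : policy_t M n) s :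
  (forall tau, (1 <= tau <= T)%N -> yval y1 tau s = yval y2 tau s) ->
  C2 T D y1 s -> C2 T D y2 s.
Proof.
move=> Hy H t Ht.
have E : vsum 1 t.+1 (fun tau => mv (A2 D t tau) (yval y1 tau s))
       = vsum 1 t.+1 (fun tau => mv (A2 D t tau) (yval y2 tau s)).
  apply: functional_extensionality => i; rewrite /vsum; apply: eq_big_nat => tau /andP [h1 h2].
  rewrite Hy // h1 /=; case/andP: Ht => _; exact: leq_trans.
by rewrite -E; apply: H.
Qed.

Lemma C3_congr {T M n} (D : Data M n) (y1 y2 : policy_t M n) s :
  (forall tau, (1 <= tau <= T)%N -> yval y1 tau s = yval y2 tau s) ->
  C3 T D y1 s -> C3 T D y2 s.
Proof.
move=> Hy H t Ht.
have E : vsum 1 t.+1 (fun tau => mv (A3 D t tau) (yval y1 tau s))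
       = vsum 1 t.+1 (fun tau => mv (A3 D t tau) (yval y2 tau s)).
  apply: functional_extensionality => i; rewrite /vsum; apply: eq_big_nat => tau /andP [h1 h2].
  rewrite Hy // h1 /=; case/andP: Ht => _; exact: leq_trans.
by rewrite -E; apply: H.
Qed.

Lemma meas_yval {T M n} {Omega} {F : (Omega -> Prop) -> Prop} (xi : Omega -> vec (M * T)%N)
  (y : policy_t M n) tau j :
  random_vector F xi -> is_policy T y -> (1 <= tau <= T)%N ->
  meas F (fun w => yval y tau (@sample T M Omega xi w) j).
Proof.
move=> Hxi Hy Ht a.
have HB : borel (fun v : vec (M * T) => y tau (@hist M (tau - 1) (ext v)) j <= a).
  apply: (borel_pre _ _ (fun v : vec (M * T) => @hist M (tau - 1) (ext v)) _
            (fun h => y tau h j <= a)).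
    by move=> i a'; apply: borel_ext.
  by apply: (Hy tau Ht (fun h => h j <= a)) => S _; apply.
exact: (Hxi _ HB).
Qed.

Lemma meas_blk {T M} {Omega} {F : (Omega -> Prop) -> Prop} (xi : Omega -> vec (M * T)%N) tau k :
  random_vector F xi -> meas F (fun w => @blk M tau (@sample T M Omega xi w) k).
Proof. move=> Hxi a; exact (Hxi (fun v => ext v (M * (tau - 1) + k)%N <= a) (borel_ext _ _ _)). Qed.

Lemma meas_C2 {T M n} (D : Data M n) {Omega} {F : (Omega -> Prop) -> Prop}
  (xi : Omega -> vec (M * T)%N) (y : policy_t M n) :
  is_sigma_algebra F -> random_vector F xi -> is_policy T y ->
  F (fun w => C2 T D y (@sample T M Omega xi w)).
Proof.
move=> HF Hxi Hy; rewrite /C2 /vle.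
apply: (F_cinter HF) => t; apply: (F_impl _ HF) => Ht; apply: (F_ford HF) => i.
rewrite /vplus; apply: (meas_plus HF).
- rewrite /vsum; apply: (meas_big _ _ _ HF) => tau; rewrite mem_index_iota => Htau.
  rewrite /mv; apply: (meas_big _ _ _ HF) => j _; apply: (meas_scale _ HF).
  apply: meas_yval => //.
  case/andP: Htau => -> h; case/andP: Ht => _; exact: leq_trans.
- rewrite /vsum; apply: (meas_big _ _ _ HF) => tau _.
  rewrite /mv; apply: (meas_big _ _ _ HF) => j _; apply: (meas_scale _ HF).
  exact: meas_blk.
Qed.

Lemma meas_C3 {T M n} (D : Data M n) {Omega} {F : (Omega -> Prop) -> Prop}
  (xi : Omega -> vec (M * T)%N) (y : policy_t M n) :
  is_sigma_algebra F -> random_vector F xi -> is_policy T y ->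
  F (fun w => C3 T D y (@sample T M Omega xi w)).
Proof.
move=> HF Hxi Hy; rewrite /C3 /vle.
apply: (F_cinter HF) => t; apply: (F_impl _ HF) => Ht; apply: (F_ford HF) => i.
rewrite /vplus; apply: (meas_plus HF).
- rewrite /vsum; apply: (meas_big _ _ _ HF) => tau; rewrite mem_index_iota => Htau.
  rewrite /mv; apply: (meas_big _ _ _ HF) => j _; apply: (meas_scale _ HF).
  apply: meas_yval => //.
  case/andP: Htau => -> h; case/andP: Ht => _; exact: leq_trans.
- rewrite /vsum; apply: (meas_big _ _ _ HF) => tau _.
  rewrite /mv; apply: (meas_big _ _ _ HF) => j _; apply: (meas_scale _ HF).
  exact: meas_blk.
Qed.

Lemma partA {T M n} (D : Data M n) {Omega} {F : (Omega -> Prop) -> Prop} {P : (Omega -> Prop) -> R}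
  (xi : Omega -> vec (M * T)%N) (p : R) (HP : is_probability F P) (Hxi : random_vector F xi)
  (y : policy_t M n) :
  @M1 T M n D Omega F P xi p y ->
  @M2 T M n D Omega P xi p y /\ @ae_eq T M n Omega F P xi y (Pi D y).
Proof.
move=> [Hy [Hp [N [HN [PN HC]]]]]; have HF := proj1 HP.
split.
  split => //.
  have : P (fun w => C2 T D y (sample xi w)) <=
         P (fun w => C2 T D y (sample xi w) /\ C3 T D y (sample xi w)).
    apply: (P_null HP (meas_C2 D xi y HF Hxi Hy)
              (F_inter2 HF (meas_C2 D xi y HF Hxi Hy) (meas_C3 D xi y HF Hxi Hy)) HN PN).
    move=> w h; case: (classic (N w)) => hn; [by right | left; split => //].
    exact: HC.
  lra.
exists N; split => //; split => // w hn t Ht i.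
by rewrite (Pi_fix D y _ (HC w hn) t Ht).
Qed.

Lemma partB {T M n} (D : Data M n) {Omega} {F : (Omega -> Prop) -> Prop} {P : (Omega -> Prop) -> R}
  (xi : Omega -> vec (M * T)%N) (p : R) (HP : is_probability F P) (Hxi : random_vector F xi)
  (Hne : forall t, (1 <= t <= T)%N ->
           forall (zs : forall tau, vec (n tau)) (h : nat -> R),
           exists u, Xset D t zs h u)
  (HPi : forall y, is_policy T y -> is_policy T (Pi D y))
  (y : policy_t M n) :
  @M2 T M n D Omega P xi p y -> @M1 T M n D Omega F P xi p (Pi D y).
Proof.
move=> [Hy Hp]; have HF := proj1 HP.
have Hz := HPi y Hy.
split => //; split.
  have : P (fun w => C2 T D y (sample xi w) /\ C3 T D y (sample xi w)) <=
         P (fun w => C2 T D (Pi D y) (sample xi w)).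
    apply: (P_mono HP (F_inter2 HF (meas_C2 D xi y HF Hxi Hy) (meas_C3 D xi y HF Hxi Hy))
                      (meas_C2 D xi (Pi D y) HF Hxi Hz)).
    move=> w [h2 h3]; apply: (C2_congr D y) h2 => tau Ht.
    by rewrite (Pi_fix D y _ h3 tau Ht).
  lra.
exists (fun _ => False); split; first exact: F_false.
split; first exact: P_empty HP.
move=> w _; exact: C3_Pi.
Qed.

Theorem lemma2p1
  (T M : nat) (n : nat -> nat) (D : Data M n)
  (Omega : Type) (F : (Omega -> Prop) -> Prop) (P : (Omega -> Prop) -> R)
  (xi : Omega -> vec (M * T)%N) (p : R)
  (HT : (2 <= T)%N) (HM : (1 <= M)%N)
  (Hn : forall t, (1 <= t <= T)%N -> (1 <= n t)%N)
  (HP : is_probability F P) (Hxi : random_vector F xi)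
  (Hp : 0 < p <= 1)
  (HB3 : forall t i j, B3 D t t i j = 0)
  (Hne : forall t, (1 <= t <= T)%N ->
           forall (zs : forall tau, vec (n tau)) (h : nat -> R),
           exists u, Xset D t zs h u)
  (HPi : forall y, is_policy T y -> is_policy T (Pi D y))
  (K : policy_t M n -> Prop) (HK : forall y, K y -> is_policy T y) :
  (forall y, @M1 T M n D Omega F P xi p y /\ K y ->
     exists y', (@M2 T M n D Omega P xi p y' /\ K y') /\
                @ae_eq T M n Omega F P xi y (Pi D y'))
  /\
  (forall z, (exists y, (@M2 T M n D Omega P xi p y /\ K y) /\ z = Pi D y) ->
     @M1 T M n D Omega F P xi p z /\ (exists y, K y /\ z = Pi D y))
  /\
  (forall z, @M1 T M n D Omega F P xi p z /\ (exists y, K y /\ z = Pi D y) ->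
     @M1 T M n D Omega F P xi p z)
  /\
  ((forall z, (exists y, @M2 T M n D Omega P xi p y /\ z = Pi D y) ->
      @M1 T M n D Omega F P xi p z)
   /\
   (forall y, @M1 T M n D Omega F P xi p y ->
      exists y', @M2 T M n D Omega P xi p y' /\
                 @ae_eq T M n Omega F P xi y (Pi D y'))).
Proof.
split.
  move=> y [H1 HKy]; exists y.
  have H := partA D xi p HP Hxi y H1.
  by split; [split; [exact: (proj1 H) | exact: HKy] | exact: (proj2 H)].
split.
  move=> z [y [[H2 HKy] ->]]; split; first exact: partB.
  by exists y.
split; first by move=> z [].
split.
  move=> z [y [H2 ->]]; exact: partB.
move=> y H1; exists y; exact: partA.
Qed.
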